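(* Let $G$ be a group satisfying the property $\mathsf{FM}$ and $\nu$ a conjugation-invariant pseudo-norm on $G$. For any elements $g_1,\dots,g_k\in G$ and real numbers $\lambda,s_1,\dots,s_k$, \[ \lim_{n\to\infty}\frac1n\,\nu\big(g_1^{[\lambda s_1n]}\cdots g_k^{[\lambda s_kn]}\big)=|\lambda|\lim_{n\to\infty}\frac1n\,\nu\big(g_1^{[s_1n]}\cdots g_k^{[s_kn]}\big), \] where $[\cdot]$ denotes the integer part.
   Context: A conjugation-invariant pseudo-norm on a group $G$ is a function $\nu\colon G\to\mathbb{R}_{\ge0}$ with $\nu(1)=0$, $\nu(f)=\nu(f^{-1})$, $\nu(fg)\le\nu(f)+\nu(g)$ and $\nu(gfg^{-1})=\nu(f)$ for all $f,g\in G$. Property $\mathsf{FM}$: for a subgroup $H\le G$, let $\nu_H(f)$ be the minimal $k$ such that $f=g_1h_1g_1^{-1}\cdots g_kh_kg_k^{-1}$ ($g_i\in G,h_i\in H$), $\infty$ if none; for $K\subset G$ let $\mathrm{D}^f_H(K)$ be the set of $h_0\in G$ such that for all $g_1,\dots,g_k\in G$ there is $h\in G$ with every element of $hh_0h^{-1}K(hh_0h^{-1})^{-1}$ commuting with every element of $\bigcup_i g_iHg_i^{-1}$. $(G,H)$ satisfies $\mathsf{FM}$ if $\nu_H<\infty$ on $G$ and $\mathrm{D}^f_H(h_1Hh_1^{-1}\cup\dots\cup h_kHh_k^{-1})\ne\emptyset$ for all $h_1,\dots,h_k\in G$; $G$ satisfies $\mathsf{FM}$ if some $(G,H)$ does.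 *)

(* Defs.v *)
From Stdlib Require Import Reals ZArith List.
Open Scope R_scope.

Record Group := {
  carrier :> Type;
  gmul : carrier -> carrier -> carrier;
  ginv : carrier -> carrier;
  gone : carrier;
  gmulA : forall x y z, gmul x (gmul y z) = gmul (gmul x y) z;
  gmul1l : forall x, gmul gone x = x;
  gmul1r : forall x, gmul x gone = x;
  gmulVl : forall x, gmul (ginv x) x = gone;
  gmulVr : forall x, gmul x (ginv x) = gone
}.

Arguments gmul {g}.
Arguments ginv {g}.
Arguments gone {g}.

Section GroupDefs.
Variable G : Group.

Definition gconj (g h : G) : G := gmul (gmul g h) (ginv g).

Fixpoint gpow_nat (x : G) (n : nat) : G :=
  match n with O => gone | S m => gmul x (gpow_nat x m) end.

Definition gpow (x : G) (z : Z) : G :=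
  match z with
  | Z0 => gone
  | Zpos p => gpow_nat x (Pos.to_nat p)
  | Zneg p => gpow_nat (ginv x) (Pos.to_nat p)
  end.

Fixpoint prod_list (l : list G) : G :=
  match l with nil => gone | x :: l' => gmul x (prod_list l') end.

Definition gcommute (x y : G) : Prop := gmul x y = gmul y x.

Definition conj_inv_pseudo_norm (nu : G -> R) : Prop :=
  (forall f, 0 <= nu f) /\
  nu gone = 0 /\
  (forall f, nu f = nu (ginv f)) /\
  (forall f g, nu (gmul f g) <= nu f + nu g) /\
  (forall f g, nu (gconj g f) = nu f).

Definition subgroup (H : G -> Prop) : Prop :=
  H gone /\ (forall x y, H x -> H y -> H (gmul x y)) /\ (forall x, H x -> H (ginv x)).

(* f = g_1 h_1 g_1^{-1} ... g_k h_k g_k^{-1} with h_i in H, i.e. nu_H(f) < oo *)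
Definition nuH_finite_at (H : G -> Prop) (f : G) : Prop :=
  exists l : list (G * G),
    Forall (fun p => H (snd p)) l /\
    f = prod_list (map (fun p => gconj (fst p) (snd p)) l).

Definition in_conj_union (H : G -> Prop) (gs : list G) (x : G) : Prop :=
  exists g, In g gs /\ exists z, H z /\ x = gconj g z.

Definition in_Df (H : G -> Prop) (K : G -> Prop) (h0 : G) : Prop :=
  forall gs : list G, exists h : G,
    forall x, K x -> forall y, in_conj_union H gs y ->
      gcommute (gconj (gconj h h0) x) y.

Definition FM_pair (H : G -> Prop) : Prop :=
  subgroup H /\
  (forall f, nuH_finite_at H f) /\
  (forall hs : list G, exists h0, in_Df H (in_conj_union H hs) h0).

Definition FM : Prop := exists H, FM_pair H.

End GroupDefs.

Arguments gpow {G}.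
Arguments prod_list {G}.

(* Main.v *)
Require Import Defs.
From Stdlib Require Import Reals ZArith List Lra Lia Classical.
Open Scope R_scope.

Lemma mul_cancel_l (G : Group) (a x y : G) : gmul a x = gmul a y -> x = y.
Proof.
  intro H. rewrite <- (gmul1l G x), <- (gmul1l G y), <- (gmulVl G a).
  rewrite <- !gmulA, H. reflexivity.
Qed.

Lemma inv_unique (G : Group) (x y : G) : gmul x y = gone -> y = ginv x.
Proof.
  intro H. apply (mul_cancel_l G x). rewrite H, gmulVr. reflexivity.
Qed.

Lemma inv_inv (G : Group) (x : G) : ginv (ginv x) = x.
Proof. symmetry. apply inv_unique. apply gmulVl. Qed.

Lemma inv_mul (G : Group) (x y : G) : ginv (gmul x y) = gmul (ginv y) (ginv x).
Proof.
  symmetry. apply inv_unique.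
  rewrite gmulA, <- (gmulA G x y), gmulVr, gmul1r, gmulVr. reflexivity.
Qed.

Lemma inv_one (G : Group) : ginv (@gone G) = gone.
Proof. symmetry. apply inv_unique. apply gmul1l. Qed.

Lemma gpow_nat_succ_r (G : Group) (x : G) n : gpow_nat G x (S n) = gmul (gpow_nat G x n) x.
Proof.
  induction n; simpl.
  - rewrite gmul1r, gmul1l. reflexivity.
  - simpl in IHn. rewrite <- gmulA, <- IHn. reflexivity.
Qed.

Lemma gpow_nonneg (G : Group) (x : G) z : (0 <= z)%Z -> gpow x z = gpow_nat G x (Z.to_nat z).
Proof. intro H; destruct z; simpl; try reflexivity. lia. Qed.

Lemma gpow_nonpos (G : Group) (x : G) z : (z <= 0)%Z -> gpow x z = gpow_nat G (ginv x) (Z.to_nat (- z)).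
Proof. intro H; destruct z; simpl; try reflexivity. lia. Qed.

Lemma gpow_succ (G : Group) (x : G) z : gpow x (z + 1) = gmul (gpow x z) x.
Proof.
  destruct (Z_le_gt_dec 0 z) as [H|H].
  - rewrite !gpow_nonneg by lia. replace (Z.to_nat (z+1)) with (S (Z.to_nat z)) by lia.
    apply gpow_nat_succ_r.
  - rewrite !gpow_nonpos by lia.
    replace (Z.to_nat (- z)) with (S (Z.to_nat (- (z+1)))) by lia.
    rewrite gpow_nat_succ_r, <- gmulA, gmulVl, gmul1r. reflexivity.
Qed.

Lemma gpow_pred (G : Group) (x : G) z : gpow x (z - 1) = gmul (gpow x z) (ginv x).
Proof.
  replace z with ((z - 1) + 1)%Z at 2 by ring. rewrite gpow_succ, <- gmulA, gmulVr, gmul1r.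
  reflexivity.
Qed.

Lemma gpow_add (G : Group) (x : G) a b : gpow x (a + b) = gmul (gpow x a) (gpow x b).
Proof.
  induction b using Z.peano_ind.
  - rewrite Z.add_0_r. simpl. rewrite gmul1r. reflexivity.
  - replace (a + Z.succ b)%Z with ((a + b) + 1)%Z by lia. unfold Z.succ.
    rewrite !gpow_succ, IHb, gmulA. reflexivity.
  - replace (a + Z.pred b)%Z with ((a + b) - 1)%Z by lia. unfold Z.pred.
    replace (b + -1)%Z with (b - 1)%Z by lia.
    rewrite !gpow_pred, IHb, gmulA. reflexivity.
Qed.

Lemma gpow_zero (G : Group) (x : G) : gpow x 0 = gone.
Proof. reflexivity. Qed.

Lemma gpow_opp (G : Group) (x : G) a : gpow x (- a) = ginv (gpow x a).
Proof.
  apply inv_unique. rewrite <- gpow_add. replace (a + - a)%Z with 0%Z by ring. reflexivity.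
Qed.

Lemma conj_mul (G : Group) (c x y : G) : gconj G c (gmul x y) = gmul (gconj G c x) (gconj G c y).
Proof.
  unfold gconj. rewrite !gmulA. f_equal. f_equal. rewrite <- (gmulA G _ (ginv c) c), gmulVl, gmul1r.
  reflexivity.
Qed.

Lemma conj_one (G : Group) (c : G) : gconj G c gone = gone.
Proof. unfold gconj. rewrite gmul1r, gmulVr. reflexivity. Qed.

Lemma conj_inv (G : Group) (c x : G) : gconj G c (ginv x) = ginv (gconj G c x).
Proof. apply inv_unique. rewrite <- conj_mul, gmulVr. apply conj_one. Qed.

Lemma conj_pow_nat (G : Group) (c x : G) n : gpow_nat G (gconj G c x) n = gconj G c (gpow_nat G x n).
Proof. induction n; simpl. - now rewrite conj_one. - now rewrite IHn, conj_mul. Qed.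

Lemma conj_pow (G : Group) (c x : G) z : gpow (gconj G c x) z = gconj G c (gpow x z).
Proof.
  destruct z; simpl. - now rewrite conj_one. - apply conj_pow_nat.
  - rewrite <- conj_inv. apply conj_pow_nat.
Qed.

Lemma conj_conj (G : Group) (a b x : G) : gconj G a (gconj G b x) = gconj G (gmul a b) x.
Proof. unfold gconj. rewrite inv_mul, !gmulA. reflexivity. Qed.

Lemma prod_conj (G : Group) (c : G) l : gconj G c (prod_list l) = prod_list (map (gconj G c) l).
Proof. induction l; simpl. - apply conj_one. - now rewrite conj_mul, IHl. Qed.

Lemma comm_sym (G : Group) (x y : G) : gcommute G x y -> gcommute G y x.
Proof. unfold gcommute; auto. Qed.

Lemma comm_mul_l (G : Group) (x y z : G) : gcommute G x z -> gcommute G y z -> gcommute G (gmul x y) z.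
Proof.
  unfold gcommute; intros H1 H2. rewrite <- gmulA, H2, gmulA, H1, gmulA. reflexivity.
Qed.

Lemma comm_one (G : Group) (z : G) : gcommute G gone z.
Proof. unfold gcommute. rewrite gmul1l, gmul1r. reflexivity. Qed.

Lemma comm_inv_l (G : Group) (x z : G) : gcommute G x z -> gcommute G (ginv x) z.
Proof.
  unfold gcommute; intro H.
  apply (mul_cancel_l G x). rewrite !gmulA, gmulVr, gmul1l, H, <- gmulA, gmulVr, gmul1r.
  reflexivity.
Qed.

Lemma comm_pow_nat_l (G : Group) (x z : G) n : gcommute G x z -> gcommute G (gpow_nat G x n) z.
Proof. intro H; induction n; simpl. apply comm_one. apply comm_mul_l; auto. Qed.

Lemma comm_pow_l (G : Group) (x z : G) a : gcommute G x z -> gcommute G (gpow x a) z.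
Proof.
  intro H; destruct a; simpl. apply comm_one. now apply comm_pow_nat_l.
  apply comm_pow_nat_l, comm_inv_l, H.
Qed.

Lemma comm_pow (G : Group) (x z : G) a b : gcommute G x z -> gcommute G (gpow x a) (gpow z b).
Proof. intro H. apply comm_pow_l, comm_sym, comm_pow_l, comm_sym, H. Qed.

Lemma comm_prod_l (G : Group) (l : list G) (z : G) :
  (forall y, In y l -> gcommute G y z) -> gcommute G (prod_list l) z.
Proof.
  induction l; simpl; intro H. apply comm_one. apply comm_mul_l; auto.
Qed.

Definition sumR {A} (l : list A) (f : A -> R) : R := fold_right (fun a r => f a + r) 0 l.

Lemma nu_nonneg G nu (Hnu : conj_inv_pseudo_norm G nu) x : 0 <= nu x.
Proof. destruct Hnu as (H&_); auto. Qed.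
Lemma nu_one G nu (Hnu : conj_inv_pseudo_norm G nu) : nu gone = 0.
Proof. destruct Hnu as (_&H&_); auto. Qed.
Lemma nu_inv G nu (Hnu : conj_inv_pseudo_norm G nu) x : nu (ginv x) = nu x.
Proof. destruct Hnu as (_&_&H&_); auto. Qed.
Lemma nu_mul G nu (Hnu : conj_inv_pseudo_norm G nu) x y : nu (gmul x y) <= nu x + nu y.
Proof. destruct Hnu as (_&_&_&H&_); auto. Qed.
Lemma nu_conj G nu (Hnu : conj_inv_pseudo_norm G nu) c x : nu (gconj G c x) = nu x.
Proof. destruct Hnu as (_&_&_&_&H); auto. Qed.

Lemma sumR_nonneg {A} (l : list A) f : (forall a, 0 <= f a) -> 0 <= sumR l f.
Proof. intro H; induction l; simpl; [lra|]. specialize (H a); lra. Qed.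

Lemma nu_pow_nat G nu (Hnu : conj_inv_pseudo_norm G nu) (x : G) n :
  nu (gpow_nat G x n) <= INR n * nu x.
Proof.
  induction n; simpl gpow_nat.
  - rewrite nu_one by auto. simpl; lra.
  - rewrite S_INR. eapply Rle_trans. apply nu_mul; auto. lra.
Qed.

Lemma nu_pow G nu (Hnu : conj_inv_pseudo_norm G nu) (x : G) z :
  nu (gpow x z) <= Rabs (IZR z) * nu x.
Proof.
  destruct (Z_le_gt_dec 0 z) as [H|H].
  - rewrite gpow_nonneg by auto. rewrite Rabs_right by (apply Rle_ge, IZR_le; auto).
    replace (IZR z) with (INR (Z.to_nat z)) by (rewrite INR_IZR_INZ, Z2Nat.id by lia; reflexivity).
    apply nu_pow_nat; auto.
  - rewrite gpow_nonpos by lia. rewrite Rabs_left by (apply IZR_lt; lia).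
    rewrite <- Ropp_Ropp_IZR.
    replace (IZR (- z)) with (INR (Z.to_nat (- z))) by (rewrite INR_IZR_INZ, Z2Nat.id by lia; reflexivity).
    rewrite <- (nu_inv G nu Hnu x). apply nu_pow_nat; auto.
Qed.

Definition Pw (G : Group) (l : list (G * R)) (f : G * R -> Z) : G :=
  prod_list (map (fun p => gpow (fst p) (f p)) l).

Definition AllComm (G : Group) (l : list (G * R)) : Prop :=
  forall p q, In p l -> In q l -> gcommute G (fst p) (fst q).

Lemma AllComm_tail G p l : AllComm G (p :: l) -> AllComm G l.
Proof. unfold AllComm; intros H a b Ha Hb; apply H; simpl; auto. Qed.

Lemma Pw_add G l f g : AllComm G l ->
  Pw G l (fun p => (f p + g p)%Z) = gmul (Pw G l f) (Pw G l g).
Proof.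
  induction l as [|p l IH]; intro Hc; unfold Pw in *; simpl.
  - rewrite gmul1l; reflexivity.
  - rewrite IH by (eapply AllComm_tail; eauto). rewrite gpow_add.
    assert (Hcm : gcommute G (gpow (fst p) (g p)) (prod_list (map (fun p0 => gpow (fst p0) (f p0)) l))).
    { apply comm_sym, comm_prod_l. intros y Hy. apply in_map_iff in Hy.
      destruct Hy as (q & <- & Hq). apply comm_pow. apply Hc; simpl; auto. }
    unfold gcommute in Hcm.
    rewrite <- !gmulA. f_equal. rewrite !gmulA. rewrite Hcm. reflexivity.
Qed.

Lemma Pw_zero G l : Pw G l (fun _ => 0%Z) = gone.
Proof. induction l; unfold Pw in *; simpl in *; auto. rewrite IHl, gmul1l. reflexivity. Qed.

Lemma Pw_opp G l f : AllComm G l -> Pw G l (fun p => (- f p)%Z) = ginv (Pw G l f).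
Proof.
  intro Hc. apply inv_unique. rewrite <- Pw_add by auto.
  rewrite <- (Pw_zero G l). unfold Pw. f_equal. apply map_ext. intro a. f_equal. ring.
Qed.

Lemma Pw_ext G l f g : (forall p, f p = g p) -> Pw G l f = Pw G l g.
Proof. intro H. unfold Pw. f_equal. apply map_ext. intro a. now rewrite H. Qed.

Lemma nu_Pw G nu (Hnu : conj_inv_pseudo_norm G nu) l f :
  nu (Pw G l f) <= sumR l (fun p => Rabs (IZR (f p)) * nu (fst p)).
Proof.
  induction l; unfold Pw in *; simpl.
  - rewrite nu_one by auto; lra.
  - eapply Rle_trans. apply nu_mul; auto. pose proof (nu_pow G nu Hnu (fst a) (f a)). lra.
Qed.

Lemma sumR_bound G nu (Hnu : conj_inv_pseudo_norm G nu) (l : list (G * R)) f t :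
  (forall p, Rabs (IZR (f p)) <= t * Rabs (snd p) + 1) ->
  sumR l (fun p => Rabs (IZR (f p)) * nu (fst p)) <=
  t * sumR l (fun p => Rabs (snd p) * nu (fst p)) + sumR l (fun p => nu (fst p)).
Proof.
  intro H; induction l; simpl; [lra|].
  specialize (H a). pose proof (nu_nonneg G nu Hnu (fst a)).
  assert (Rabs (IZR (f a)) * nu (fst a) <= (t * Rabs (snd a) + 1) * nu (fst a))
    by (apply Rmult_le_compat_r; auto). nra.
Qed.

Lemma ip_add x y : (0 <= Int_part (x + y) - Int_part x - Int_part y <= 1)%Z.
Proof.
  destruct (base_Int_part x) as [a1 a2]. destruct (base_Int_part y) as [b1 b2].
  destruct (base_Int_part (x+y)) as [c1 c2].
  assert (IZR (Int_part (x+y)) < IZR (Int_part x + Int_part y + 2)).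
  { rewrite !plus_IZR. lra. }
  assert (IZR (Int_part x + Int_part y - 1) < IZR (Int_part (x+y))).
  { rewrite minus_IZR, plus_IZR. lra. }
  apply lt_IZR in H. apply lt_IZR in H0. lia.
Qed.

Lemma ip_opp x : (-1 <= Int_part (- x) + Int_part x <= 0)%Z.
Proof.
  destruct (base_Int_part x) as [a1 a2]. destruct (base_Int_part (-x)) as [b1 b2].
  assert (IZR (Int_part (-x)) < IZR (- Int_part x + 1)).
  { rewrite plus_IZR, opp_IZR. lra. }
  assert (IZR (- Int_part x - 2) < IZR (Int_part (-x))).
  { rewrite minus_IZR, opp_IZR. lra. }
  apply lt_IZR in H. apply lt_IZR in H0. lia.
Qed.

Lemma ip_lip a b : Rabs (IZR (Int_part a - Int_part b)) <= Rabs (a - b) + 1.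
Proof.
  destruct (base_Int_part a) as [a1 a2]. destruct (base_Int_part b) as [b1 b2].
  rewrite minus_IZR. apply Rabs_le.
  pose proof (Rle_abs (a - b)). pose proof (Rle_abs (- (a - b))). rewrite Rabs_Ropp in H0.
  lra.
Qed.

Lemma abs_small z : (-1 <= z <= 1)%Z -> Rabs (IZR z) <= 0 * Rabs 0 + 1.
Proof.
  intro H. apply Rabs_le. assert (IZR (-1) <= IZR z) by (apply IZR_le; lia).
  assert (IZR z <= IZR 1) by (apply IZR_le; lia). simpl in *. lra.
Qed.

Definition Fw (G : Group) (l : list (G * R)) (x : R) : G :=
  Pw G l (fun p => Int_part (snd p * x)).

Lemma Fw_A G nu (Hnu : conj_inv_pseudo_norm G nu) l x y : AllComm G l ->
  nu (Fw G l (x + y)) <= nu (Fw G l x) + nu (Fw G l y) + sumR l (fun p => nu (fst p)).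
Proof.
  intro Hc. unfold Fw.
  set (e := fun p : G * R => (Int_part (snd p * (x + y)) - Int_part (snd p * x) - Int_part (snd p * y))%Z).
  rewrite (Pw_ext G l _ (fun p => ((Int_part (snd p * x) + Int_part (snd p * y)) + e p)%Z))
    by (intro p; unfold e; ring).
  rewrite !Pw_add by auto.
  eapply Rle_trans. apply nu_mul; auto.
  eapply Rle_trans. apply Rplus_le_compat_r, nu_mul; auto.
  apply Rplus_le_compat_l.
  eapply Rle_trans. apply nu_Pw; auto.
  eapply Rle_trans. apply (sumR_bound G nu Hnu l e 0).
  { intro p. pose proof (abs_small (e p)). rewrite Rabs_R0 in H. rewrite Rmult_0_l in *.
    apply H. unfold e. rewrite Rmult_plus_distr_l. pose proof (ip_add (snd p * x) (snd p * y)). lia. }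
  lra.
Qed.

Lemma Fw_B G nu (Hnu : conj_inv_pseudo_norm G nu) l x y : AllComm G l ->
  nu (Fw G l x) <= nu (Fw G l y) + Rabs (x - y) * sumR l (fun p => Rabs (snd p) * nu (fst p))
     + sumR l (fun p => nu (fst p)).
Proof.
  intro Hc. unfold Fw.
  set (e := fun p : G * R => (Int_part (snd p * x) - Int_part (snd p * y))%Z).
  rewrite (Pw_ext G l _ (fun p => (Int_part (snd p * y) + e p)%Z))
    by (intro p; unfold e; ring).
  rewrite !Pw_add by auto.
  eapply Rle_trans. apply nu_mul; auto.
  rewrite Rplus_assoc. apply Rplus_le_compat_l.
  eapply Rle_trans. apply nu_Pw; auto.
  apply (sumR_bound G nu Hnu l e).
  intro p. unfold e. eapply Rle_trans. apply ip_lip.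
  replace (snd p * x - snd p * y) with (snd p * (x - y)) by ring.
  rewrite Rabs_mult. lra.
Qed.

Lemma Fw_C G nu (Hnu : conj_inv_pseudo_norm G nu) l x : AllComm G l ->
  nu (Fw G l (- x)) <= nu (Fw G l x) + sumR l (fun p => nu (fst p)).
Proof.
  intro Hc. unfold Fw.
  set (e := fun p : G * R => (Int_part (snd p * - x) + Int_part (snd p * x))%Z).
  rewrite (Pw_ext G l _ (fun p => (- Int_part (snd p * x) + e p)%Z))
    by (intro p; unfold e; ring).
  rewrite Pw_add by auto. rewrite Pw_opp by auto.
  eapply Rle_trans. apply nu_mul; auto. rewrite nu_inv by auto.
  apply Rplus_le_compat_l.
  eapply Rle_trans. apply nu_Pw; auto.
  eapply Rle_trans. apply (sumR_bound G nu Hnu l e 0).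
  { intro p. pose proof (abs_small (e p)). rewrite Rabs_R0 in H. rewrite Rmult_0_l in *.
    apply H. unfold e. replace (snd p * - x) with (- (snd p * x)) by ring.
    pose proof (ip_opp (snd p * x)). lia. }
  lra.
Qed.

Lemma inf_exists (h : R -> R) : (forall x, 0 <= h x) ->
  exists L, 0 <= L /\ (forall x, 0 < x -> L * x <= h x) /\
    (forall e, 0 < e -> exists y, 0 < y /\ h y < (L + e) * y).
Proof.
  intro Hh.
  set (E := fun r => exists x, 0 < x /\ r = - (h x / x)).
  assert (Hb : bound E).
  { exists 0. intros r (x & Hx & ->). assert (0 <= h x / x).
    { unfold Rdiv. apply Rmult_le_pos; auto. left; apply Rinv_0_lt_compat; auto. } lra. }
  assert (Hne : exists r, E r) by (exists (- (h 1 / 1)); exists 1; split; auto; lra).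
  destruct (completeness E Hb Hne) as [m [Hub Hlub]].
  exists (- m). split; [|split].
  - assert (m <= 0). { apply Hlub. intros r (x & Hx & ->). assert (0 <= h x / x).
      { unfold Rdiv. apply Rmult_le_pos; auto. left; apply Rinv_0_lt_compat; auto. } lra. }
    lra.
  - intros x Hx. assert (- (h x / x) <= m) by (apply Hub; exists x; auto).
    assert (h x = (h x / x) * x) by (field; lra). nra.
  - intros e He. apply NNPP. intro Hn.
    assert (m <= m - e).
    { apply Hlub. intros r (x & Hx & ->).
      assert ((- m + e) * x <= h x).
      { apply Rnot_lt_le. intro Hl. apply Hn. exists x; split; auto. }
      assert (h x / x = h x * / x) by reflexivity.
      assert (h x = (h x / x) * x) by (field; lra).
      assert (- m + e <= h x / x).
      { apply (Rmult_le_reg_r x); auto. lra. } lra. }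
    lra.
Qed.

Lemma floor_decomp (x y : R) : 0 <= x -> 0 < y ->
  exists m : nat, exists r, 0 <= r <= y /\ x = INR m * y + r /\ INR m * y <= x.
Proof.
  intros Hx Hy. set (q := x / y). destruct (base_Int_part q) as [k1 k2].
  assert (Hq : 0 <= q) by (unfold q, Rdiv; apply Rmult_le_pos; auto; left; apply Rinv_0_lt_compat; auto).
  assert (Hk : (0 <= Int_part q)%Z). { assert (IZR (-1) < IZR (Int_part q)) by (simpl; lra).
    apply lt_IZR in H. lia. }
  exists (Z.to_nat (Int_part q)).
  rewrite INR_IZR_INZ, Z2Nat.id by auto.
  assert (Hxq : x = q * y) by (unfold q; field; lra).
  exists (x - IZR (Int_part q) * y). split; [|split]; try lra.
  - split; nra.
  - nra.
Qed.

Lemma mult_bound (h : R -> R) C C1 y :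
  (forall x y, h (x + y) <= h x + h y) ->
  (forall x y, h x <= h y + C1 * Rabs (x - y) + C) -> 0 <= C1 -> 0 < y ->
  forall m : nat, forall r, 0 <= r <= y -> h (INR m * y + r) <= INR m * h y + (h 0 + C1 * y + C).
Proof.
  intros HA HB HC1 Hy m. induction m; intros r Hr.
  - simpl. rewrite Rmult_0_l, Rplus_0_l, Rmult_0_l, Rplus_0_l.
    eapply Rle_trans. apply (HB r 0). rewrite Rminus_0_r, Rabs_right by lra.
    assert (C1 * r <= C1 * y) by (apply Rmult_le_compat_l; lra). lra.
  - rewrite S_INR. replace ((INR m + 1) * y + r) with ((INR m * y + r) + y) by ring.
    eapply Rle_trans. apply HA. specialize (IHm r Hr). lra.
Qed.

Lemma real_lim (g : R -> R) C C1 : (forall x, 0 <= g x) -> 0 <= C -> 0 <= C1 ->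
  (forall x y, g (x + y) <= g x + g y + C) ->
  (forall x y, g x <= g y + C1 * Rabs (x - y) + C) ->
  exists L, 0 <= L /\ forall e, 0 < e -> exists X, 0 < X /\
    forall x, X <= x -> Rabs (g x - L * x) <= e * x.
Proof.
  intros Hg HC HC1 HA HB.
  set (h := fun x => g x + C).
  assert (Hh : forall x, 0 <= h x) by (intro x; unfold h; specialize (Hg x); lra).
  assert (HhA : forall x y, h (x + y) <= h x + h y) by (intros x y; unfold h; specialize (HA x y); lra).
  assert (HhB : forall x y, h x <= h y + C1 * Rabs (x - y) + C) by (intros x y; unfold h; specialize (HB x y); lra).
  destruct (inf_exists h Hh) as (L & HL0 & HL1 & HL2).
  exists L. split; auto. intros e He.
  destruct (HL2 (e / 2)) as (y & Hy & Hhy); [lra|].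
  set (M := h 0 + C1 * y + C).
  assert (HM : 0 <= M) by (unfold M; specialize (Hh 0); assert (0 <= C1 * y) by (apply Rmult_le_pos; lra); lra).
  exists (2 * (M + C) / e + 1). split.
  { assert (0 <= 2 * (M + C) / e) by (unfold Rdiv; apply Rmult_le_pos; [lra| left; apply Rinv_0_lt_compat; lra]). lra. }
  intros x Hx.
  assert (Hex : 2 * (M + C) + e <= e * x).
  { replace (2 * (M + C) + e) with (e * (2 * (M + C) / e + 1)) by (field; lra).
    apply Rmult_le_compat_l; lra. }
  assert (Hx0 : 0 < x).
  { assert (0 <= 2 * (M + C) / e) by (unfold Rdiv; apply Rmult_le_pos; [lra| left; apply Rinv_0_lt_compat; lra]). lra. }
  destruct (floor_decomp x y) as (m & r & Hr & Hxr & Hmy); try lra.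
  pose proof (mult_bound h C C1 y HhA HhB HC1 Hy m r Hr) as Hmb. rewrite <- Hxr in Hmb. fold M in Hmb.
  assert (Hm0 : 0 <= INR m) by apply pos_INR.
  assert (INR m * h y <= INR m * ((L + e / 2) * y)) by (apply Rmult_le_compat_l; lra).
  assert ((L + e/2) * (INR m * y) <= (L + e/2) * x) by (apply Rmult_le_compat_l; lra).
  pose proof (HL1 x Hx0).
  unfold h in *. apply Rabs_le. split; nra.
Qed.

Lemma seq_lim (g : R -> R) C C1 : (forall x, 0 <= g x) -> 0 <= C -> 0 <= C1 ->
  (forall x y, g (x + y) <= g x + g y + C) ->
  (forall x y, g x <= g y + C1 * Rabs (x - y) + C) ->
  (forall x, g (- x) <= g x + C) ->
  exists L, forall lam, Un_cv (fun n => g (lam * INR n) / INR n) (Rabs lam * L).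
Proof.
  intros Hg HC HC1 HA HB HN.
  destruct (real_lim g C C1 Hg HC HC1 HA HB) as (L & HL0 & HL).
  exists L. intro lam. set (a := Rabs lam).
  assert (Ha : 0 <= a) by apply Rabs_pos.
  assert (Hcl : forall x, Rabs (g (lam * x) - g (a * x)) <= C).
  { intro x. unfold a. destruct (Rle_or_lt 0 lam).
    - rewrite (Rabs_right lam) by lra. rewrite Rminus_diag, Rabs_R0. auto.
    - rewrite (Rabs_left lam) by lra. apply Rabs_le.
      pose proof (HN (lam * x)). pose proof (HN (- lam * x)).
      replace (- (lam * x)) with (- lam * x) in H0 by ring.
      replace (- (- lam * x)) with (lam * x) in H1 by ring. lra. }
  assert (Hc2 : forall eps, 0 < eps -> exists N, forall n, (N <= n)%nat ->
            Rabs (g (a * INR n) - a * L * INR n) <= eps * INR n).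
  { intros eps He. destruct (Req_dec a 0) as [Ha0|Ha0].
    - destruct (INR_archimed eps (g 0) He) as [N HN'].
      exists N. intros n Hn. rewrite Ha0, !Rmult_0_l, Rminus_0_r, Rabs_right by (apply Rle_ge; auto).
      apply le_INR in Hn. assert (eps * INR N <= eps * INR n) by (apply Rmult_le_compat_l; lra). lra.
    - assert (Hap : 0 < a) by lra.
      destruct (HL (eps / a)) as (X & HX0 & HX). { unfold Rdiv; apply Rmult_lt_0_compat; auto. apply Rinv_0_lt_compat; auto. }
      destruct (INR_archimed a X Hap) as [N HN'].
      exists N. intros n Hn. apply le_INR in Hn.
      assert (X <= a * INR n) by (assert (a * INR N <= a * INR n) by (apply Rmult_le_compat_l; lra); lra).
      specialize (HX _ H).
      replace (a * L * INR n) with (L * (a * INR n)) by ring.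
      replace (eps * INR n) with (eps / a * (a * INR n)) by (field; lra). auto. }
  intros eps He.
  destruct (Hc2 (eps / 2)) as [N1 HN1]; [lra|].
  destruct (INR_archimed (eps / 2) C) as [N2 HN2]; [lra|].
  exists (N1 + N2 + 1)%nat. intros n Hn.
  assert (Hn1 : (N1 <= n)%nat) by lia.
  assert (Hn2 : INR N2 <= INR n) by (apply le_INR; lia).
  assert (Hn0 : 1 <= INR n) by (replace 1 with (INR 1) by reflexivity; apply le_INR; lia).
  specialize (HN1 n Hn1). specialize (Hcl (INR n)).
  assert (Hd : Rabs (g (lam * INR n) - a * L * INR n) < eps * INR n).
  { assert (INR N2 * (eps / 2) <= INR n * (eps / 2)) by (apply Rmult_le_compat_r; lra).
    eapply Rle_lt_trans.
    replace (g (lam * INR n) - a * L * INR n) with ((g (lam * INR n) - g (a * INR n)) + (g (a * INR n) - a * L * INR n)) by ring.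
    apply Rabs_triang. lra. }
  unfold R_dist.
  replace (g (lam * INR n) / INR n - a * L) with ((g (lam * INR n) - a * L * INR n) * / INR n) by (field; lra).
  rewrite Rabs_mult, (Rabs_right (/ INR n)) by (apply Rle_ge; left; apply Rinv_0_lt_compat; lra).
  apply (Rmult_lt_reg_r (INR n)); [lra|].
  rewrite Rmult_assoc, Rinv_l by lra. lra.
Qed.

Definition Gen (G : Group) (K : G -> Prop) (z : G) : Prop :=
  exists xs, Forall K xs /\ z = prod_list xs.

Lemma gen_mono (G : Group) (K K' : G -> Prop) z : (forall x, K x -> K' x) -> Gen G K z -> Gen G K' z.
Proof.
  intros HK (xs & Hxs & ->). exists xs. split; auto.
  rewrite Forall_forall in *. auto.
Qed.

Lemma comm_gen (G : Group) (K K' : G -> Prop) a b : (forall x y, K x -> K' y -> gcommute G x y) ->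
  Gen G K a -> Gen G K' b -> gcommute G a b.
Proof.
  intros HK (xs & Hxs & ->) (ys & Hys & ->). rewrite Forall_forall in *.
  apply comm_prod_l. intros x Hx. apply comm_sym, comm_prod_l. intros y Hy.
  apply comm_sym. auto.
Qed.

Lemma cu_app_l (G : Group) H (X acc : list G) y : in_conj_union G H X y -> in_conj_union G H (X ++ acc) y.
Proof. intros (g & Hg & z & Hz & ->). exists g. split; [apply in_or_app; auto| eauto]. Qed.
Lemma cu_app_r (G : Group) H (X acc : list G) y : in_conj_union G H acc y -> in_conj_union G H (X ++ acc) y.
Proof. intros (g & Hg & z & Hz & ->). exists g. split; [apply in_or_app; auto| eauto]. Qed.

Lemma gen_conj (G : Group) H hs psi z : Gen G (in_conj_union G H hs) z ->
  Gen G (in_conj_union G H (map (gmul psi) hs)) (gconj G psi z).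
Proof.
  intros (xs & Hxs & ->). exists (map (gconj G psi) xs). split; [|apply prod_conj].
  rewrite Forall_forall in *. intros y Hy. apply in_map_iff in Hy. destruct Hy as (x & <- & Hx).
  destruct (Hxs x Hx) as (g & Hg & w & Hw & ->). exists (gmul psi g). split.
  apply in_map; auto. exists w. split; auto. apply conj_conj.
Qed.

Lemma gens_exist (G : Group) H (Hfin : forall f, nuH_finite_at G H f) (l : list (G * R)) :
  exists hs, forall p, In p l -> Gen G (in_conj_union G H hs) (fst p).
Proof.
  induction l as [|p l IH].
  - exists nil. intros p [].
  - destruct IH as [hs Hhs]. destruct (Hfin (fst p)) as (l0 & Hl0 & Hp).
    exists (map fst l0 ++ hs). intros q [<-|Hq].
    + exists (map (fun p0 => gconj G (fst p0) (snd p0)) l0). split; auto.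
      rewrite Forall_forall in *. intros y Hy. apply in_map_iff in Hy. destruct Hy as (x & <- & Hx).
      apply cu_app_l. exists (fst x). split. apply in_map; auto. exists (snd x). split; auto.
    + eapply gen_mono; [|apply Hhs; auto]. intros; apply cu_app_r; auto.
Qed.

Definition Lc (G : Group) (cl : list (G * (G * R))) : list (G * R) :=
  map (fun q => (gconj G (fst q) (fst (snd q)), snd (snd q))) cl.

Lemma conjugators (G : Group) H hs h0 (Hd : in_Df G H (in_conj_union G H hs) h0) (l : list (G * R)) :
  (forall p, In p l -> Gen G (in_conj_union G H hs) (fst p)) ->
  exists cl, map snd cl = l /\ exists acc, AllComm G (Lc G cl) /\
    forall q, In q (Lc G cl) -> Gen G (in_conj_union G H acc) (fst q).
Proof.
  induction l as [|p l IH]; intro Hg.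
  - exists nil. split; auto. exists nil. split.
    + intros a b [].
    + intros q [].
  - destruct IH as (cl & Hcl & acc & Hc & Hgen). { intros; apply Hg; simpl; auto. }
    destruct (Hd acc) as [h Hh]. set (psi := gconj G h h0).
    assert (Hnew : Gen G (in_conj_union G H (map (gmul psi) hs)) (gconj G psi (fst p))).
    { apply gen_conj. apply Hg; simpl; auto. }
    assert (Hcomm : forall q, In q (Lc G cl) -> gcommute G (gconj G psi (fst p)) (fst q)).
    { intros q Hq. apply (comm_gen G (fun z => exists x, in_conj_union G H hs x /\ z = gconj G psi x)
        (in_conj_union G H acc)).
      - intros x y (x0 & Hx0 & ->) Hy. apply Hh; auto.
      - destruct (Hg p (or_introl eq_refl)) as (xs & Hxs & Hp). rewrite Hp, prod_conj.
        exists (map (gconj G psi) xs). split; auto. rewrite Forall_forall in *.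
        intros y Hy. apply in_map_iff in Hy. destruct Hy as (x & <- & Hx). eauto.
      - apply Hgen; auto. }
    exists ((psi, p) :: cl). split. simpl; congruence.
    exists (map (gmul psi) hs ++ acc). split.
    + intros a b Ha Hb. simpl in Ha, Hb.
      destruct Ha as [<-|Ha]; destruct Hb as [<-|Hb]; simpl.
      * reflexivity.
      * apply Hcomm; auto.
      * apply comm_sym, Hcomm; auto.
      * apply Hc; auto.
    + intros q [<-|Hq]; simpl.
      * eapply gen_mono; [|apply Hnew]. intros; apply cu_app_l; auto.
      * eapply gen_mono; [|apply Hgen; auto]. intros; apply cu_app_r; auto.
Qed.

Lemma conj_prod_err {A} (G : Group) nu (Hnu : conj_inv_pseudo_norm G nu) (l : list A) (c y : A -> G) :
  exists e, prod_list (map (fun a => gconj G (c a) (y a)) l) = gmul e (prod_list (map y l)) /\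
    nu e <= 2 * sumR l (fun a => nu (c a)).
Proof.
  induction l as [|a l IH]; simpl.
  - exists gone. rewrite gmul1l, nu_one by auto. split; auto; lra.
  - destruct IH as (e & He & Hn).
    exists (gmul (gmul (gconj G (c a) (y a)) e) (ginv (y a))). split.
    + rewrite He. rewrite <- !gmulA. f_equal. f_equal. rewrite gmulA, gmulVl, gmul1l. reflexivity.
    + replace (gmul (gmul (gconj G (c a) (y a)) e) (ginv (y a))) with
        (gmul (gmul (gconj G (c a) (y a)) (ginv (y a))) (gconj G (y a) e)).
      2:{ unfold gconj. rewrite !gmulA. rewrite <- (gmulA G _ (ginv (y a)) (y a)), gmulVl, gmul1r. reflexivity. }
      eapply Rle_trans. apply nu_mul; auto. rewrite nu_conj by auto.
      assert (nu (gmul (gconj G (c a) (y a)) (ginv (y a))) <= 2 * nu (c a)).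
      { unfold gconj. rewrite <- !gmulA. eapply Rle_trans. apply nu_mul; auto.
        rewrite gmulA. fold (gconj G (y a) (ginv (c a))). rewrite nu_conj, nu_inv by auto. lra. }
      lra.
Qed.

Lemma Un_cv_ext (u v : nat -> R) l l' : (forall n, u n = v n) -> l = l' -> Un_cv u l -> Un_cv v l'.
Proof. intros H <- Hu e He. destruct (Hu e He) as [N HN]. exists N. intros n Hn. rewrite <- H. auto. Qed.

Lemma Rabs_le_inv a b : Rabs a <= b -> - b <= a <= b.
Proof. intro H. pose proof (Rle_abs a). pose proof (Rle_abs (- a)). rewrite Rabs_Ropp in H1. lra. Qed.

Theorem lemma3p4 (G : Group) (nu : G -> R)
  (Hnu : conj_inv_pseudo_norm G nu) (HFM : FM G)
  (gs : list (G * R)) (lam : R) :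
  exists L : R,
    Un_cv (fun n : nat =>
      nu (prod_list (map (fun p => gpow (fst p) (Int_part (snd p * INR n))) gs)) / INR n) L /\
    Un_cv (fun n : nat =>
      nu (prod_list (map (fun p => gpow (fst p) (Int_part (lam * snd p * INR n))) gs)) / INR n)
      (Rabs lam * L).
Proof.
  destruct HFM as (H & Hsub & Hfin & Hdf).
  destruct (gens_exist G H Hfin gs) as [hs Hhs].
  destruct (Hdf hs) as [h0 Hh0].
  destruct (conjugators G H hs h0 Hh0 gs Hhs) as (cl & Hcl & acc & Hc & _).
  set (L' := Lc G cl).
  set (g0 := fun x => nu (prod_list (map (fun p => gpow (fst p) (Int_part (snd p * x))) gs))).
  set (f := fun x => nu (Fw G L' x)).
  set (D := 2 * sumR cl (fun q => nu (fst q))).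
  set (S0 := sumR L' (fun p => nu (fst p))).
  set (S1 := sumR L' (fun p => Rabs (snd p) * nu (fst p))).
  assert (HD0 : 0 <= D) by (unfold D; assert (0 <= sumR cl (fun q => nu (fst q))) by (apply sumR_nonneg; intro; apply nu_nonneg; auto); lra).
  assert (HS0 : 0 <= S0) by (apply sumR_nonneg; intro; apply nu_nonneg; auto).
  assert (HS1 : 0 <= S1) by (apply sumR_nonneg; intro; apply Rmult_le_pos; [apply Rabs_pos|apply nu_nonneg; auto]).
  assert (Hgf : forall x, Rabs (g0 x - f x) <= D).
  { intro x.
    destruct (conj_prod_err G nu Hnu cl fst (fun q => gpow (fst (snd q)) (Int_part (snd (snd q) * x))))
      as (e & He & Hne).
    assert (Hf : Fw G L' x = prod_list (map (fun q => gconj G (fst q) (gpow (fst (snd q)) (Int_part (snd (snd q) * x)))) cl)).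
    { unfold Fw, Pw, L', Lc. rewrite map_map. f_equal. apply map_ext. intro q. simpl. apply conj_pow. }
    assert (Hg : prod_list (map (fun p => gpow (fst p) (Int_part (snd p * x))) gs) =
                 prod_list (map (fun q => gpow (fst (snd q)) (Int_part (snd (snd q) * x))) cl)).
    { rewrite <- Hcl, map_map. reflexivity. }
    unfold g0, f. rewrite Hg, Hf, He.
    set (W := prod_list (map (fun q => gpow (fst (snd q)) (Int_part (snd (snd q) * x))) cl)).
    assert (nu (gmul e W) <= nu e + nu W) by (apply nu_mul; auto).
    assert (nu W <= nu (ginv e) + nu (gmul e W)).
    { replace W with (gmul (ginv e) (gmul e W)) at 1 by (rewrite gmulA, gmulVl, gmul1l; reflexivity).
      apply nu_mul; auto. }
    rewrite nu_inv in H1 by auto. apply Rabs_le. fold D in Hne. lra. }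
  assert (HgA : forall x y, g0 (x + y) <= g0 x + g0 y + (S0 + 3 * D)).
  { intros x y. pose proof (Fw_A G nu Hnu L' x y Hc). fold S0 in H0.
    pose proof (Hgf (x+y)); pose proof (Hgf x); pose proof (Hgf y).
    apply Rabs_le_inv in H1; apply Rabs_le_inv in H2; apply Rabs_le_inv in H3.
    unfold f in *. lra. }
  assert (HgB : forall x y, g0 x <= g0 y + S1 * Rabs (x - y) + (S0 + 3 * D)).
  { intros x y. pose proof (Fw_B G nu Hnu L' x y Hc). fold S0 S1 in H0.
    pose proof (Hgf x); pose proof (Hgf y).
    apply Rabs_le_inv in H1; apply Rabs_le_inv in H2.
    unfold f in *. rewrite (Rmult_comm S1). lra. }
  assert (HgC : forall x, g0 (- x) <= g0 x + (S0 + 3 * D)).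
  { intros x. pose proof (Fw_C G nu Hnu L' x Hc). fold S0 in H0.
    pose proof (Hgf x); pose proof (Hgf (-x)).
    apply Rabs_le_inv in H1; apply Rabs_le_inv in H2.
    unfold f in *. lra. }
  destruct (seq_lim g0 (S0 + 3 * D) S1) as [L HL]; auto.
  { intro x; exact (nu_nonneg G nu Hnu _). }
  { lra. }
  exists L. split.
  - eapply Un_cv_ext; [| |apply (HL 1)].
    + intro n. unfold g0. f_equal. f_equal. f_equal. apply map_ext. intro p. f_equal. f_equal. ring.
    + rewrite Rabs_R1. ring.
  - eapply Un_cv_ext; [| |apply (HL lam)].
    + intro n. unfold g0. f_equal. f_equal. f_equal. apply map_ext. intro p. f_equal. f_equal. ring.
    + reflexivity.
Qed.
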